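(* Let $\mathcal A\in\mathbb R^{n\times n\times l}$, $\mathcal X\in\mathbb R^{n\times p\times l}$, $\mathcal B\in\mathbb R^{p\times p\times l}$ and $\mathcal C\in\mathbb R^{n\times p\times l}$. The analytical solution of the t-Sylvester equation $$\mathcal A*\mathcal X+\mathcal X*\mathcal B=\mathcal C$$ is given by $$\operatorname{vec}(\mathcal X)=\big(\widetilde{\operatorname{bcirc}}(\mathcal B)^\top\otimes I_n+[I_p]_{l\times l}\odot\operatorname{bcirc}(\mathcal A)\big)^{\dagger}\operatorname{vec}(\mathcal C).$$
   Context: Frontal slices $A^{(i)}=\mathcal A(:,:,i)$. $\operatorname{bcirc}(\mathcal A)$ is the block circulant matrix whose $(i,j)$ block is $A^{(((i-j)\bmod l)+1)}$; $\widetilde{\operatorname{bcirc}}(\mathcal B)$ is the block matrix whose $(i,j)$ block is $B^{(((j-i)\bmod l)+1)}$ (first block row $B^{(1)},B^{(2)},\dots,B^{(l)}$). The t-product is $\mathcal A*\mathcal B=\operatorname{fold}(\operatorname{bcirc}(\mathcal A)\operatorname{unfold}(\mathcal B))$, with $\operatorname{unfold}$ stacking frontal slices vertically and $\operatorname{fold}$ its inverse. $\operatorname{vec}(\mathcal C)=\mathcal C(:)$ is the column-major vectorization (columns of $C^{(1)}$, then of $C^{(2)}$, and so on). $[I_p]_{l\times l}$ is the $pl\times pl$ block matrix all of whose $p\times p$ blocks are $I_p$. For block matrices $M=[M_{ij}]$ and $N=[N_{ij}]$, both partitioned into $l\times l$ blocks (here $\operatorname{bcirc}(\mathcal A)$ into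 $n\times n$ blocks), the Khatri–Rao product $M\odot N$ is the block matrix with $(i,j)$ block $M_{ij}\otimes N_{ij}$. $\otimes$ is the Kronecker product and $\dagger$ the Moore–Penrose inverse. *)

(* Defs.v *)
From HB Require Import structures.
From mathcomp Require Import all_boot all_order all_algebra.
Set Warnings "-notation-overridden,-ambiguous-paths".

Set Implicit Arguments. Unset Strict Implicit. Unset Printing Implicit Defensive.
Import Order.TTheory GRing.Theory Num.Theory.
Local Open Scope ring_scope.

Section Defs.
Variable R : pzRingType.

(* entry of a matrix at natural-number indices, 0 when out of range *)
Definition mget m n (M : 'M[R]_(m, n)) (a b : nat) : R :=
  match @insub _ (fun k => k < m)%N 'I_m a, @insub _ (fun k => k < n)%N 'I_n b with
  | Some i, Some j => M i j
  | _, _ => 0%R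
  end.

(* a tensor in R^{m x n x l}: its l frontal slices (0-based) *)
Definition tensor m n l := {ffun 'I_l -> 'M[R]_(m, n)}.

Definition tslice m n l (T : tensor m n l) (k : nat) : 'M[R]_(m, n) :=
  match @insub _ (fun x => x < l)%N 'I_l k with Some i => T i | None => 0%R end.

(* bcirc A : block (i,j) (0-based) is slice ((i - j) mod l) *)
Definition bcirc m n l (A : tensor m n l) : 'M[R]_(l * m, l * n) :=
  \matrix_(r, c) mget (tslice A ((r %/ m + l - c %/ n) %% l)%N) (r %% m)%N (c %% n)%N.

(* tilde-bcirc B : block (i,j) (0-based) is slice ((j - i) mod l) *)
Definition bcirct m n l (B : tensor m n l) : 'M[R]_(l * m, l * n) :=
  \matrix_(r, c) mget (tslice B ((c %/ n + l - r %/ m) %% l)%N) (r %% m)%N (c %% n)%N.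

(* unfold: stack frontal slices vertically *)
Definition tunfold m n l (B : tensor m n l) : 'M[R]_(l * m, n) :=
  \matrix_(r, c) mget (tslice B (r %/ m)%N) (r %% m)%N c.

Definition tfold m n l (M : 'M[R]_(l * m, n)) : tensor m n l :=
  [ffun k : 'I_l => \matrix_(a, b) mget M (k * m + a)%N b].

Definition tprod m n p l (A : tensor m n l) (B : tensor n p l) : tensor m p l :=
  tfold (bcirc A *m tunfold B).

(* column-major vectorization: columns of C^(1), then of C^(2), ... *)
Definition tvec m n l (T : tensor m n l) : 'cV[R]_(l * (n * m)) :=
  \col_r mget (tslice T (r %/ (n * m))%N) ((r %% (n * m)) %% m)%N ((r %% (n * m)) %/ m)%N.

Definition kron m1 n1 m2 n2 (M : 'M[R]_(m1, n1)) (N : 'M[R]_(m2, n2))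
  : 'M[R]_(m1 * m2, n1 * n2) :=
  \matrix_(r, c) (mget M (r %/ m2)%N (c %/ n2)%N * mget N (r %% m2)%N (c %% n2)%N).

Definition mblock l a b (M : 'M[R]_(l * a, l * b)) (i j : nat) : 'M[R]_(a, b) :=
  \matrix_(x, y) mget M (i * a + x)%N (j * b + y)%N.

(* Khatri-Rao product of l x l block matrices: block (i,j) is M_ij (x) N_ij *)
Definition khatri_rao l a b c d (M : 'M[R]_(l * a, l * b)) (N : 'M[R]_(l * c, l * d))
  : 'M[R]_(l * (a * c), l * (b * d)) :=
  \matrix_(r, s) mget (kron (mblock M (r %/ (a * c))%N (s %/ (b * d))%N)
                            (mblock N (r %/ (a * c))%N (s %/ (b * d))%N))
                      (r %% (a * c))%N (s %% (b * d))%N.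

(* [I_p]_{l x l}: all p x p blocks equal to I_p *)
Definition Iblocks l p : 'M[R]_(l * p, l * p) :=
  \matrix_(r, c) ((r %% p)%N == (c %% p)%N)%:R.

Definition is_MP m n (M : 'M[R]_(m, n)) (P : 'M[R]_(n, m)) : Prop :=
  [/\ M *m P *m M = M, P *m M *m P = P,
      (M *m P)^T = M *m P & (P *m M)^T = P *m M].

Definition tsylv_matrix n p l (A : tensor n n l) (B : tensor p p l)
  : 'M[R]_(l * (p * n)) :=
  (castmx (esym (mulnA l p n), esym (mulnA l p n))
         (kron (bcirct B)^T (1%:M : 'M[R]_n))%R
  + khatri_rao (Iblocks l p) (bcirc A))%R.

End Defs.

(* Main.v *)
Require Import Defs.
From mathcomp Require Import all_boot all_order all_algebra zify.
Import Order.TTheory GRing.Theory Num.Theory.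
Local Open Scope ring_scope.

Section Aux.
Context {R : comPzRingType}.

Lemma mget_in {m n} (M : 'M[R]_(m,n)) {a b} (ha : (a < m)%N) (hb : (b < n)%N) :
  mget M a b = M (Ordinal ha) (Ordinal hb).
Proof.
rewrite /mget; case: insubP => [i _ ei|/negP//]; case: insubP => [j _ ej|/negP//].
by congr (M _ _); apply: val_inj.
Qed.

Lemma mget_eq {m n} (M : 'M[R]_(m,n)) {a b : nat} (i : 'I_m) (j : 'I_n) :
  a = i -> b = j -> mget M a b = M i j.
Proof.
move=> -> ->; rewrite (mget_in _ (ltn_ord i) (ltn_ord j)).
by congr (M _ _); apply: val_inj.
Qed.

Lemma tslice_in {m n l} (T : tensor R m n l) {k} (hk : (k < l)%N) :
  tslice T k = T (Ordinal hk).
Proof.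
rewrite /tslice; case: insubP => [i _ ei|/negP//].
by congr (T _); apply: val_inj.
Qed.

Definition tg {m n l} (T : tensor R m n l) k a b := mget (tslice T k) a b.

Lemma sum_ord_nat {N : nat} {F : 'I_N -> R} (G : nat -> R) :
  (forall i : 'I_N, F i = G i) -> \sum_(i < N) F i = \sum_(0 <= i < N) G i.
Proof. by move=> h; rewrite big_mkord; apply: eq_bigr => i _. Qed.

Lemma sum_split (m k : nat) (G : nat -> R) :
  \sum_(0 <= c < (m * k)%N) G c = \sum_(j < m) \sum_(t < k) G (j * k + t)%N.
Proof.
elim: m => [|m IH]; first by rewrite mul0n big_ord0 big_geq.
rewrite mulSnr (@big_cat_nat _ _ _ (m * k)%N) ?leq_addr //= IH big_ord_recr /=.
congr (_ + _); rewrite -{1}(add0n (m * k)%N) big_addn addKn big_mkord; apply: eq_bigr => i _.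
by rewrite addnC.
Qed.

Lemma lt_mix b p a n : (b < p)%N -> (a < n)%N -> (b * n + a < p * n)%N.
Proof.
move=> hb ha; apply: (leq_trans (n := b * n + n)); first by rewrite ltn_add2l.
by rewrite -mulSnr leq_mul2r hb orbT.
Qed.

Lemma divmix j d t : (t < d)%N -> ((j * d + t) %/ d = j)%N.
Proof.
move=> h; have hd : (0 < d)%N by apply: leq_ltn_trans h.
by rewrite divnMDl // divn_small // addn0.
Qed.

Lemma modmix j d t : (t < d)%N -> ((j * d + t) %% d = t)%N.
Proof. by move=> h; rewrite modnMDl modn_small. Qed.

Lemma sum_delta {n a} (ha : (a < n)%N) (G : nat -> R) :
  \sum_(a' < n) ((a == a' :> nat)%:R * G a') = G a.
Proof.
rewrite (bigD1 (Ordinal ha)) //= eqxx mul1r big1 ?addr0 // => i hi.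
have -> : (a == i) = false.
  apply/negbTE; apply: contra hi => /eqP e; apply/eqP; apply: val_inj => /=.
  by rewrite e.
by rewrite mul0r.
Qed.

Lemma sum_delta' {n a} (ha : (a < n)%N) (G : nat -> R) :
  \sum_(a' < n) ((a' == a :> nat)%:R * G a') = G a.
Proof.
rewrite -(sum_delta ha); apply: eq_bigr => i _; by rewrite eq_sym.
Qed.

Lemma tprodE m n p l (A : tensor R m n l) (X : tensor R n p l) k a b :
  (k < l)%N -> (a < m)%N -> (b < p)%N ->
  tg (tprod A X) k a b =
  \sum_(j < l) \sum_(a' < n) tg A ((k + l - j) %% l)%N a a' * tg X j a' b.
Proof.
move=> hk ha hb.
rewrite /tg (tslice_in _ hk) /tprod /tfold ffunE (mget_in _ ha hb) mxE /=.
have h1 : (k * m + a < l * m)%N by apply: lt_mix.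
rewrite (mget_in _ h1 hb) mxE.
rewrite (sum_ord_nat (fun c => mget (bcirc A) (k * m + a)%N c * mget (tunfold X) c b)); last first.
  by move=> i; congr (_ * _); symmetry; apply: mget_eq.
rewrite sum_split; apply: eq_bigr => j _; apply: eq_bigr => a' _.
have h2 : (j * n + a' < l * n)%N by apply: lt_mix.
rewrite (mget_in _ h1 h2) mxE /= (mget_in _ h2 hb) mxE /=.
by rewrite !divmix // !modmix.
Qed.


Lemma invol {k l j} : (k < l)%N -> (j < l)%N -> ((k + l - (k + l - j) %% l) %% l = j)%N.
Proof.
move=> hk hj; case: (leqP j k) => h.
  have e1 : (k + l - j = (k - j) + l)%N by lia.
  rewrite e1 modnDr (modn_small (m := (k - j)%N)); last by lia.
  have e2 : (k + l - (k - j) = j + l)%N by lia.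
  by rewrite e2 modnDr modn_small.
rewrite (modn_small (m := (k + l - j)%N)); last by lia.
have e2 : (k + l - (k + l - j) = j)%N by lia.
by rewrite e2 modn_small.
Qed.

Lemma reindex_circ {k l} (F : nat -> nat -> R) : (k < l)%N ->
  \sum_(j < l) F ((k + l - j) %% l)%N j = \sum_(j < l) F j ((k + l - j) %% l)%N.
Proof.
move=> hk; have lpos : (0 < l)%N by apply: leq_ltn_trans hk.
pose h (j : 'I_l) : 'I_l := Ordinal (ltn_pmod (k + l - j)%N lpos).
have hinj : injective h.
  move=> x y e; apply: ord_inj.
  have e' : ((k + l - x) %% l = (k + l - y) %% l)%N := congr1 val e.
  by rewrite -(invol hk (ltn_ord x)) e' invol.
rewrite (reindex_inj hinj) /=; apply: eq_bigr => j _.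
by rewrite invol.
Qed.

Lemma tg_add m n l (T1 T2 : tensor R m n l) k a b :
  (k < l)%N -> (a < m)%N -> (b < n)%N -> tg (T1 + T2) k a b = tg T1 k a b + tg T2 k a b.
Proof.
move=> hk ha hb; rewrite /tg !(tslice_in _ hk) ffunE !(mget_in _ ha hb).
by rewrite mxE.
Qed.

Lemma mget_1 {n a a'} (ha : (a < n)%N) (ha' : (a' < n)%N) :
  mget (1%:M : 'M[R]_n) a a' = (a == a')%:R.
Proof. by rewrite (mget_in _ ha ha') mxE. Qed.

Lemma sum_split3 l p n (G : nat -> R) :
  \sum_(0 <= c < (l * (p * n))%N) G c =
  \sum_(j < l) \sum_(b' < p) \sum_(a' < n) G (j * (p * n) + (b' * n + a'))%N.
Proof.
rewrite sum_split; apply: eq_bigr => j _.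
by rewrite -(big_mkord xpredT (fun t => G (j * (p * n) + t)%N)) sum_split.
Qed.


Lemma idx_div j p n b a : (a < n)%N -> ((j * (p * n) + (b * n + a)) %/ n = j * p + b)%N.
Proof. by move=> h; rewrite mulnA addnA -mulnDl divmix. Qed.

Lemma idx_mod j p n b a : (a < n)%N -> ((j * (p * n) + (b * n + a)) %% n = a)%N.
Proof. by move=> h; rewrite mulnA addnA -mulnDl modmix. Qed.

Lemma tvec_tsylv {n p l} (A : tensor R n n l) (B : tensor R p p l) (X : tensor R n p l) :
  tvec (tprod A X + tprod X B) = tsylv_matrix A B *m tvec X.
Proof.
apply/matrixP => r z; rewrite (ord1 z) !mxE.
have hr0 := ltn_ord r.
have hlpn : (0 < l * (p * n))%N by apply: leq_ltn_trans hr0.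
have hpn : (0 < p * n)%N by move: hlpn; rewrite muln_gt0 => /andP[].
have hp : (0 < p)%N by move: hpn; rewrite muln_gt0 => /andP[].
have hn : (0 < n)%N by move: hpn; rewrite muln_gt0 => /andP[].
set k := (r %/ (p * n))%N; set s := (r %% (p * n))%N.
set b := (s %/ n)%N; set a := (s %% n)%N.
have hk : (k < l)%N by rewrite ltn_divLR.
have hs : (s < p * n)%N by rewrite ltn_pmod.
have hb : (b < p)%N by rewrite ltn_divLR.
have ha : (a < n)%N by rewrite ltn_pmod.
have hr : ((r : nat) = k * (p * n) + (b * n + a))%N.
  by rewrite {1}(divn_eq r (p * n)) -/k -/s {1}(divn_eq s n).
rewrite -/(tg _ k a b) tg_add // !tprodE //.
rewrite [RHS](sum_ord_nat (fun c => mget (tsylv_matrix A B) r c * mget (tvec X) c 0)); last first.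
  by move=> c /=; congr (_ * _); symmetry; apply: mget_eq.
rewrite sum_split3.
have entry : forall j b' a', (j < l)%N -> (b' < p)%N -> (a' < n)%N ->
  mget (tsylv_matrix A B) r (j * (p * n) + (b' * n + a'))%N *
  mget (tvec X) (j * (p * n) + (b' * n + a'))%N 0 =
  (tg B ((k + l - j) %% l)%N b' b * (a == a')%:R +
   (b == b')%:R * tg A ((k + l - j) %% l)%N a a') * tg X j a' b'.
  move=> j b' a' hj hb' ha'.
  have hc : (j * (p * n) + (b' * n + a') < l * (p * n))%N by apply: lt_mix => //; apply: lt_mix.
  rewrite (mget_in _ (ltn_ord r) hc) (mget_in _ hc (ltn0Sn 0)) /tsylv_matrix !mxE /= castmxE /= !mxE /=.
  have hba : (b * n + a < p * n)%N by apply: lt_mix.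
  have hba' : (b' * n + a' < p * n)%N by apply: lt_mix.
  have hkp : (k * p + b < l * p)%N by apply: lt_mix.
  have hjp : (j * p + b' < l * p)%N by apply: lt_mix.
  have hkn : (k * n + a < l * n)%N by apply: lt_mix.
  have hjn : (j * n + a' < l * n)%N by apply: lt_mix.
  rewrite hr !idx_div // !idx_mod // !divmix // !modmix //.
  rewrite (mget_in _ hkp hjp) !mxE (mget_1 ha ha') (mget_in _ hba hba') !mxE /=.
  rewrite !divmix // !modmix // (mget_in _ hb hb') (mget_in _ ha ha') !mxE /=.
  rewrite (mget_in _ hkp hjp) (mget_in _ hkn hjn) !mxE /= !divmix // !modmix //.
rewrite [RHS](eq_bigr (fun j : 'I_l =>
   \sum_(b' < p) \sum_(a' < n)
     ((a == a' :> nat)%:R * (tg B ((k + l - j) %% l)%N b' b * tg X j a' b') +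
      (b == b' :> nat)%:R * (tg A ((k + l - j) %% l)%N a a' * tg X j a' b')))); last first.
  move=> j _; apply: eq_bigr => b' _; apply: eq_bigr => a' _.
  rewrite entry //; rewrite mulrDl; congr (_ + _).
    by rewrite mulrCA mulrA.
  by rewrite mulrA.
under eq_bigr => j _ do under eq_bigr => b' _ do rewrite big_split /=.
under eq_bigr => j _ do rewrite big_split /=.
rewrite big_split /= [RHS]addrC; congr (_ + _).
  apply: eq_bigr => j _; rewrite exchange_big /=; apply: eq_bigr => a' _; symmetry.
  exact: (sum_delta hb (fun b' => tg A ((k + l - j) %% l)%N a a' * tg X j a' b')).
transitivity (\sum_(j < l) \sum_(b' < p) tg B ((k + l - j) %% l)%N b' b * tg X j a b').
  etransitivity; first exact: (reindex_circ (fun u v => \sum_(b' < p) tg X u a b' * tg B v b' b) hk).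
  by apply: eq_bigr => j _ /=; apply: eq_bigr => b' _; rewrite mulrC.
apply: eq_bigr => j _; apply: eq_bigr => b' _; symmetry.
exact: (sum_delta ha (fun a' => tg B ((k + l - j) %% l)%N b' b * tg X j a' b')).
Qed.


Definition untvec {n p l} (v : 'cV[R]_(l * (p * n))) : tensor R n p l :=
  [ffun k : 'I_l => \matrix_(a < n, b < p) mget v (k * (p * n) + (b * n + a))%N 0].

Lemma tvec_untvec {n p l} (v : 'cV[R]_(l * (p * n))) : tvec (untvec v) = v.
Proof.
apply/matrixP => r z; rewrite (ord1 z) !mxE.
have hr0 := ltn_ord r.
have hlpn : (0 < l * (p * n))%N by apply: leq_ltn_trans hr0.
have hpn : (0 < p * n)%N by move: hlpn; rewrite muln_gt0 => /andP[].
set k := (r %/ (p * n))%N; set s := (r %% (p * n))%N.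
set b := (s %/ n)%N; set a := (s %% n)%N.
have hk : (k < l)%N by rewrite ltn_divLR.
have hs : (s < p * n)%N by rewrite ltn_pmod.
have hn : (0 < n)%N by move: hpn; rewrite muln_gt0 => /andP[].
have hb : (b < p)%N by rewrite ltn_divLR.
have ha : (a < n)%N by rewrite ltn_pmod.
have hr : ((r : nat) = k * (p * n) + (b * n + a))%N.
  by rewrite {1}(divn_eq r (p * n)) -/k -/s {1}(divn_eq s n).
rewrite (tslice_in _ hk) ffunE (mget_in _ ha hb) mxE /= -hr.
by apply: mget_eq.
Qed.

Lemma untvec_tvec {n p l} (X : tensor R n p l) : untvec (tvec X) = X.
Proof.
apply/ffunP => k; rewrite ffunE; apply/matrixP => a b; rewrite mxE.
have hba : (b * n + a < p * n)%N by apply: lt_mix.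
have hc : (k * (p * n) + (b * n + a) < l * (p * n))%N by apply: lt_mix.
rewrite (mget_in _ hc (ltn0Sn 0)) mxE /= divmix // modmix // divmix // modmix //.
rewrite (tslice_in _ (ltn_ord k)).
have -> : Ordinal (ltn_ord k) = k by apply: val_inj.
exact: mget_eq.
Qed.

Lemma tvec_inj {n p l} (X Y : tensor R n p l) : tvec X = tvec Y -> X = Y.
Proof. by move=> e; rewrite -(untvec_tvec X) e untvec_tvec. Qed.

End Aux.

Theorem mainTheorem19 (R : realFieldType) (n p l : nat)
  (A : tensor R n n l) (B : tensor R p p l) (C : tensor R n p l)
  (P : 'M[R]_(l * (p * n))) :
  is_MP (tsylv_matrix A B) P ->
  forall X : tensor R n p l, tprod A X + tprod X B = C ->
  exists X0 : tensor R n p l,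
    [/\ tvec X0 = P *m tvec C,
        tprod A X0 + tprod X0 B = C
      & \sum_i (tvec X0 i 0) ^+ 2 <= \sum_i (tvec X i 0) ^+ 2].
Proof.
move=> [h1 h2 h3 h4] X hX.
set M := tsylv_matrix A B.
have hc : tvec C = M *m tvec X by rewrite -hX tvec_tsylv.
exists (untvec (P *m tvec C)); split.
- by rewrite tvec_untvec.
- apply: tvec_inj; rewrite tvec_tsylv tvec_untvec hc !mulmxA h1.
  done.
rewrite tvec_untvec hc; set x := tvec X.
rewrite mulmxA; set Q := P *m M.
have hQ : Q *m Q = Q by rewrite /Q mulmxA h2.
set y := Q *m x; set zz := x - y.
have hyz : \sum_i y i 0 * zz i 0 = 0.
  have e : y^T *m zz = 0.
    rewrite /zz /y trmx_mul h4 mulmxBr -/Q (mulmxA (x^T *m Q) Q x) -(mulmxA x^T Q Q) hQ.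
    by rewrite subrr.
  transitivity ((y^T *m zz) 0 0); last by rewrite e mxE.
  rewrite mxE; apply: eq_bigr => i _; rewrite [y^T _ _]mxE; reflexivity.
have ex : forall i, x i 0 = y i 0 + zz i 0.
  by move=> i; rewrite /zz !mxE addrCA subrr addr0.
under [X in _ <= X]eq_bigr => j _ do rewrite ex sqrrD.
rewrite !big_split /= hyz add0r addr0 lerDl.
by apply: sumr_ge0 => i _; apply: sqr_ge0.
Qed.
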